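(* Let $b>0$ and $\varepsilon\in\mathbb R$ with $b+\varepsilon>0$ and $\varepsilon\neq0$. Then the matrix $P(b,\varepsilon,0)$ has two eigenvalues $\lambda_1,\lambda_2$ with $0<\lambda_1<1$ and $\lambda_2=\lambda_1^{-1}>1$, with corresponding eigenvectors $v_1=(1,f_1)^T$ and $v_2=(1,f_1^{-1})^T$, where $$f_1=\frac{-\alpha+\gamma-\sqrt{(\alpha-\gamma)^2-4\beta^2}}{2\beta}$$ satisfies $f_1<-1$ if $\varepsilon<0$ and $f_1\in(-1,0)$ if $\varepsilon>0$.
   Context: For $k\in\mathbb R$ let $A_1=\begin{pmatrix}-b&0\\-b&-(b+\varepsilon)e^{-ik}\end{pmatrix}$, $A_2=\begin{pmatrix}-b&-(b+\varepsilon)e^{ik}\\0&-b\end{pmatrix}$, $A_3=\begin{pmatrix}-(b+\varepsilon)e^{-ik}&0\\-b&-b\end{pmatrix}$, $A_4=\begin{pmatrix}-b&-b\\0&-(b+\varepsilon)\end{pmatrix}$, $A_5=\begin{pmatrix}-b&0\\-(b+\varepsilon)e^{ik}&-b\end{pmatrix}$, $A_6=\begin{pmatrix}-(b+\varepsilon)&-b\\0&-b\end{pmatrix}$, and $P(b,\varepsilon,k)=-A_6^{-1}A_5A_4^{-1}A_3A_2^{-1}A_1$. With $t=(b+\varepsilon)/b$, define $\alpha=-t^2+2t-\frac4t+\frac4{t^2}$, $\beta=-t^3+t^2+t-3+\frac2t$, $\gamma=t^4-t^2+2t-1$ (these are the entries of $P(b,\varepsilon,0)=\begin{pmatrix}\alpha&\beta\\-\beta&\gamma\end{pmatrix}$).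 *)

(* Defs.v *)
From mathcomp Require Import all_boot all_order all_algebra.
Set Implicit Arguments. Unset Strict Implicit. Unset Printing Implicit Defensive.
Import Order.TTheory GRing.Theory Num.Theory.
Local Open Scope ring_scope.

Definition mx2 {R : ringType} (a b c d : R) : 'M[R]_2 :=
  \matrix_(i < 2, j < 2)
    if i == 0 :> nat then (if j == 0 :> nat then a else b)
    else (if j == 0 :> nat then c else d).

Definition cv2 {R : ringType} (x y : R) : 'cV[R]_2 :=
  \col_(i < 2) if i == 0 :> nat then x else y.

Section Pmat.
Variable R : fieldType.
Variables b eps : R.
(* The matrices A_1..A_6 at k = 0 (so e^{+-ik} = 1; all entries are real). *)
Definition A1 := mx2 (- b) 0 (- b) (- (b + eps)).
Definition A2 := mx2 (- b) (- (b + eps)) 0 (- b).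
Definition A3 := mx2 (- (b + eps)) 0 (- b) (- b).
Definition A4 := mx2 (- b) (- b) 0 (- (b + eps)).
Definition A5 := mx2 (- b) 0 (- (b + eps)) (- b).
Definition A6 := mx2 (- (b + eps)) (- b) 0 (- b).
Definition P0 : 'M[R]_2 :=
  - (invmx A6 *m A5 *m invmx A4 *m A3 *m invmx A2 *m A1).

Definition tpar := (b + eps) / b.
Definition alpha := let t := tpar in - t ^+ 2 + 2 * t - 4 / t + 4 / t ^+ 2.
Definition beta := let t := tpar in - t ^+ 3 + t ^+ 2 + t - 3 + 2 / t.
Definition gamma := let t := tpar in t ^+ 4 - t ^+ 2 + 2 * t - 1.
End Pmat.

Definition f1 (R : rcfType) (b eps : R) : R :=
  (- alpha b eps + gamma b eps
   - Num.sqrt ((alpha b eps - gamma b eps) ^+ 2 - 4 * beta b eps ^+ 2))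
  / (2 * beta b eps).

(* Main.v *)
Require Import Defs.
From mathcomp Require Import all_boot all_order all_algebra.
From mathcomp Require Import ring lra.
Import Order.TTheory GRing.Theory Num.Theory.
Local Open Scope ring_scope.

Section M.
Variable R : fieldType.
Implicit Types a b c d x y k : R.

Lemma mx2_mul a b c d a' b' c' d' :
  mx2 a b c d *m mx2 a' b' c' d' =
  mx2 (a * a' + b * c') (a * b' + b * d') (c * a' + d * c') (c * b' + d * d').
Proof.
apply/matrixP=> i j; rewrite !mxE !big_ord_recr big_ord0 /= !mxE add0r.
by case: i => -[|[|i]] Hi //; case: j => -[|[|j]] Hj.
Qed.

Lemma mx2_opp a b c d : - mx2 a b c d = mx2 (-a) (-b) (-c) (-d).
Proof.
apply/matrixP=> i j; rewrite !mxE.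
by case: i => -[|[|i]] Hi //; case: j => -[|[|j]] Hj.
Qed.

Lemma mx2_1 : 1%:M = mx2 1 0 0 (1 : R).
Proof.
apply/matrixP=> i j; rewrite !mxE.
by case: i => -[|[|i]] Hi //; case: j => -[|[|j]] Hj.
Qed.

Lemma mx2_cv2 a b c d x y :
  mx2 a b c d *m cv2 x y = cv2 (a * x + b * y) (c * x + d * y).
Proof.
apply/matrixP=> i j; rewrite !mxE !big_ord_recr big_ord0 /= !mxE add0r.
by case: i => -[|[|i]] Hi.
Qed.

Lemma scale_cv2 k x y : k *: cv2 x y = cv2 (k * x) (k * y).
Proof.
apply/matrixP=> i j; rewrite !mxE.
by case: i => -[|[|i]] Hi.
Qed.

Lemma invmx_mx2 a b c d : a * d - b * c != 0 ->
  invmx (mx2 a b c d) =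
  mx2 (d / (a * d - b * c)) (- b / (a * d - b * c))
      (- c / (a * d - b * c)) (a / (a * d - b * c)).
Proof.
move=> h.
set B := mx2 (d / (a * d - b * c)) _ _ _.
have e : mx2 a b c d *m B = 1%:M.
  rewrite mx2_mul mx2_1; congr mx2; field; exact: h.
have [u _] := mulmx1_unit e.
by rewrite -[RHS]mul1mx -(mulVmx u) -mulmxA e mulmx1.
Qed.
End M.

Lemma P0E (R : fieldType) (b eps : R) : b != 0 -> b + eps != 0 ->
  P0 b eps = mx2 (alpha b eps) (beta b eps) (- beta b eps) (gamma b eps).
Proof.
move=> hb he.
rewrite /P0 /A1 /A2 /A3 /A4 /A5 /A6 !invmx_mx2; last first.
- by rewrite !(mulr0, subr0, mulrNN) mulf_neq0.
- by rewrite !(mulr0, subr0, mulrNN) mulf_neq0.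
- by rewrite !(mulr0, subr0, mulrNN) mulf_neq0.
rewrite !mx2_mul mx2_opp /alpha /beta /gamma /tpar.
congr mx2; field; by rewrite !oppr_eq0 hb he.
Qed.

Lemma key (R : rcfType) (a be g : R) :
  a * g + be ^+ 2 = 1 -> 2 < a + g -> be != 0 ->
  let r := Num.sqrt ((a - g) ^+ 2 - 4 * be ^+ 2) in
  let f := (- a + g - r) / (2 * be) in
  let l1 := (a + g - r) / 2 in
  0 < l1 < 1 /\ 1 < l1^-1 /\
      a + be * f = l1 /\ - be + g * f = l1 * f /\
      a + be * f^-1 = l1^-1 /\ - be + g * f^-1 = l1^-1 * f^-1 /\
      (0 < be -> g - a < 0 -> f < -1) /\ (be < 0 -> 0 < g - a -> -1 < f < 0).
Proof.
move=> hdet hs hbe r f l1.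
have hD : (a - g) ^+ 2 - 4 * be ^+ 2 = (a + g) ^+ 2 - 4.
  have -> : (a - g) ^+ 2 - 4 * be ^+ 2 = (a + g) ^+ 2 - 4 * (a * g + be ^+ 2) by ring.
  by rewrite hdet mulr1.
have hDp : 0 < (a - g) ^+ 2 - 4 * be ^+ 2 by rewrite hD; nra.
have hr0 : 0 <= r by rewrite sqrtr_ge0.
have hr2 : r ^+ 2 = (a + g) ^+ 2 - 4 by rewrite sqr_sqrtr ?hD // -hD ltW.
have hrp : 0 < r by rewrite sqrtr_gt0.
have hrs : r < a + g by nra.
have hrs2 : a + g - 2 < r by nra.
have hl1 : 0 < l1 < 1 by apply/andP; split; rewrite /l1; lra.
set l2 := (a + g + r) / 2.
have hl12 : l1 * l2 = 1.
  have -> : l1 * l2 = ((a + g) ^+ 2 - r ^+ 2) / 4 by rewrite /l1 /l2; field.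
  by rewrite hr2; field.
have l1n0 : l1 != 0 by case/andP: hl1 => h _; rewrite gt_eqF.
have hl1i : l1^-1 = l2 by rewrite -[LHS]mulr1 -hl12 mulrA mulVf // mul1r.
set f2 := (- a + g + r) / (2 * be).
have hff2 : f * f2 = 1.
  have -> : f * f2 = ((g - a) ^+ 2 - r ^+ 2) / (4 * be ^+ 2) by rewrite /f /f2; field.
  rewrite hr2 -hD; field; exact: hbe.
have fn0 : f != 0 by apply/eqP=> h; move: hff2; rewrite h mul0r => /eqP; rewrite eq_sym oner_eq0.
have hfi : f^-1 = f2 by rewrite -[LHS]mulr1 -hff2 mulrA mulVf // mul1r.
have q1 : be * f ^+ 2 + (a - g) * f + be = 0.
  have -> : be * f ^+ 2 + (a - g) * f + be
     = (r ^+ 2 - ((a - g) ^+ 2 - 4 * be ^+ 2)) / (4 * be) by rewrite /f; field.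
  by rewrite hr2 hD subrr mul0r.
have q2 : be * f2 ^+ 2 + (a - g) * f2 + be = 0.
  have -> : be * f2 ^+ 2 + (a - g) * f2 + be
     = (r ^+ 2 - ((a - g) ^+ 2 - 4 * be ^+ 2)) / (4 * be) by rewrite /f2; field.
  by rewrite hr2 hD subrr mul0r.
have e1 : a + be * f = l1 by rewrite /f /l1; field.
have e2 : a + be * f2 = l2 by rewrite /f2 /l2; field.
have hsum : f + f2 = (g - a) / be by rewrite /f /f2; field.
have hdiff : f2 - f = r / be by rewrite /f /f2; field.
split => //; split; [|split => //; split; [|split;[|split]]].
- rewrite hl1i /l2; lra.
- rewrite -e1; apply/eqP; rewrite -subr_eq0; apply/eqP.
  rewrite -[RHS](oppr0) -q1; ring.
- by rewrite hfi hl1i.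
- rewrite hfi hl1i -e2; apply/eqP; rewrite -subr_eq0; apply/eqP.
  rewrite -[RHS](oppr0) -q2; ring.
split.
- move=> hb hga.
  have s1 : f + f2 < 0 by rewrite hsum pmulr_llt0 ?invr_gt0.
  have s2 : 0 < f2 - f by rewrite hdiff divr_gt0.
  nra.
- move=> hb hga.
  have s1 : f + f2 < 0.
    by rewrite hsum pmulr_rlt0 // invr_lt0.
  have s2 : f2 - f < 0 by rewrite hdiff pmulr_rlt0 // invr_lt0.
  apply/andP; split; nra.
Qed.

Theorem theorem8 (R : rcfType) (b eps : R) :
  0 < b -> 0 < b + eps -> eps != 0 ->
  exists lambda1 lambda2 : R,
    0 < lambda1 < 1 /\ lambda2 = lambda1^-1 /\ 1 < lambda2 /\
    P0 b eps *m cv2 1 (f1 b eps) = lambda1 *: cv2 1 (f1 b eps) /\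
    P0 b eps *m cv2 1 (f1 b eps)^-1 = lambda2 *: cv2 1 (f1 b eps)^-1 /\
    (eps < 0 -> f1 b eps < -1) /\
    (0 < eps -> -1 < f1 b eps < 0).
Proof.
move=> hb hbe hne.
have hb0 : b != 0 by rewrite gt_eqF.
have hbe0 : b + eps != 0 by rewrite gt_eqF.
have ht : 0 < tpar b eps by rewrite /tpar divr_gt0.
have ht1 : tpar b eps - 1 = eps / b by rewrite /tpar; field.
have hdet : alpha b eps * gamma b eps + beta b eps ^+ 2 = 1.
  rewrite /alpha /beta /gamma; set t := tpar b eps.
  field; by rewrite gt_eqF.
have hbeta : beta b eps * tpar b eps =
   - (tpar b eps - 1) * (tpar b eps ^+ 3 - tpar b eps + 2).
  rewrite /beta; set t := tpar b eps; field; by rewrite gt_eqF.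
have hga : (gamma b eps - alpha b eps) * tpar b eps ^+ 2 =
   (tpar b eps - 1) * (tpar b eps ^+ 2 * (tpar b eps + 1) * (tpar b eps ^+ 2 + 1) + 4).
  rewrite /alpha /gamma; set t := tpar b eps; field; by rewrite gt_eqF.
have hs : (alpha b eps + gamma b eps - 2) * tpar b eps ^+ 2 =
   (tpar b eps - 1) ^+ 2 * (tpar b eps ^+ 4 + 2 * tpar b eps ^+ 3 + tpar b eps ^+ 2
      + 4 * tpar b eps + 4).
  rewrite /alpha /gamma; set t := tpar b eps; field; by rewrite gt_eqF.
move: hdet hbeta hga hs ht1 ht.
rewrite /f1; set t := tpar b eps; set a := alpha b eps; set be := beta b eps;
  set g := gamma b eps => hdet hbeta hga hs ht1 ht; clearbody t.
have hQ : 0 < t ^+ 3 - t + 2 by nra.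
have hQ2 : 0 < t ^+ 2 * (t + 1) * (t ^+ 2 + 1) + 4.
  have h3 : 0 < t ^+ 2 by rewrite exprn_gt0.
  have h4 : 0 < t ^+ 2 * (t + 1) * (t ^+ 2 + 1).
    by rewrite !mulr_gt0 //; lra.
  lra.
have hQ3 : 0 < t ^+ 4 + 2 * t ^+ 3 + t ^+ 2 + 4 * t + 4.
  have h1 : 0 < t ^+ 3 by rewrite exprn_gt0.
  have h2 : 0 < t ^+ 4 by rewrite exprn_gt0.
  have h3 : 0 < t ^+ 2 by rewrite exprn_gt0.
  lra.
have htn1 : t - 1 != 0 by rewrite ht1 mulf_neq0 // invr_eq0.
have hsq : 0 < (t - 1) ^+ 2 by rewrite exprn_even_gt0.
have ht2 : 0 < t ^+ 2 by rewrite exprn_gt0.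
have hs2 : 2 < a + g.
  have : 0 < (a + g - 2) * t ^+ 2 by rewrite hs mulr_gt0.
  rewrite pmulr_lgt0 //; lra.
have hben0 : be != 0.
  apply/eqP=> h; move: hbeta; rewrite h mul0r => /eqP; rewrite eq_sym mulf_eq0 oppr_eq0.
  by rewrite (negPf htn1) gt_eqF.
have [hl1 [hl2 [e1 [e2 [e3 [e4 [s1 s2]]]]]]] := @key R a be g hdet hs2 hben0.
eexists; exists (((a + g - Num.sqrt ((a - g) ^+ 2 - 4 * be ^+ 2)) / 2)^-1).
split; first exact: hl1.
split; first by [].
split; first exact: hl2.
split.
  rewrite P0E // mx2_cv2 scale_cv2 !mulr1; congr cv2; [exact: e1|exact: e2].
split.
  rewrite P0E // mx2_cv2 scale_cv2 !mulr1; congr cv2; [exact: e3|exact: e4].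
have tm : (t - 1) * b = eps by rewrite ht1; field.
split.
- move=> he.
  have htl : t - 1 < 0.
    by move: he; rewrite -tm pmulr_llt0.
  apply: s1.
  + have : 0 < be * t by rewrite hbeta mulNr oppr_gt0 pmulr_llt0.
    by rewrite pmulr_lgt0.
  + have : (g - a) * t ^+ 2 < 0 by rewrite hga pmulr_llt0 // mulrC pmulr_llt0.
    by rewrite pmulr_llt0.
- move=> he.
  have htl : 0 < t - 1.
    by move: he; rewrite -tm pmulr_lgt0.
  apply: s2.
  + have : be * t < 0 by rewrite hbeta mulNr oppr_lt0 mulr_gt0.
    by rewrite pmulr_llt0.
  + have : 0 < (g - a) * t ^+ 2 by rewrite hga mulr_gt0.
    by rewrite pmulr_lgt0.
Qed.
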